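(* Let $W\in\mathcal{P}(\mathcal{Y}|\mathcal{X})$ be singular. Consider any $(N,R)$ code $(f,\varphi)$ with codewords $\mathbf{x}^N(m)$, $m\in\mathcal{M}$, and average error probability $\bar{\mathrm{P}}_{\mathrm{e}}(f,\varphi)$. Fix $Q\in\mathcal{P}(\mathcal{X})$ and $\mathbf{z}^N\in\mathcal{X}^N$, and assume that for all $m\in\mathcal{M}$, $W(\mathcal{S}_R(Q)\mid\mathbf{x}^N(m))=W(\mathcal{S}_R(Q)\mid\mathbf{z}^N)$ and $q_Q$ dominates $W(\cdot|x)$ for every $x$ in the support of the empirical distribution of $\mathbf{x}^N(m)$. Then $$\bar{\mathrm{P}}_{\mathrm{e}}(f,\varphi)\ge W(\mathcal{S}_R(Q)\mid\mathbf{z}^N)-\sum_{\mathbf{y}^N\in\mathcal{S}_R(Q)}q_Q(\mathbf{y}^N)\exp\Big\{-N\Big[R-\frac1N\sum_{i=1}^N\ln\frac1{\alpha_{y_i}(Q)}\Big]\Big\}.$$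
   Context: $\mathcal{X},\mathcal{Y}$ finite; memoryless channel $W(\mathbf{y}^N|\mathbf{x}^N)=\prod_iW(y_i|x_i)$. $W$ is singular: for all $(x,y,z)$ with $W(y|x)W(y|z)>0$, $W(y|x)=W(y|z)$. An $(N,R)$ code has message set $\mathcal{M}=\{1,\dots,\lceil e^{NR}\rceil\}$, encoder $f$ and decoder $\varphi:\mathcal{Y}^N\to\mathcal{M}$; average error probability is over uniform messages. $q_Q(y)=\sum_xQ(x)W(y|x)$, $q_Q(\mathbf{y}^N)=\prod_iq_Q(y_i)$; $\alpha_y(Q)=\sum_{x:W(y|x)>0}Q(x)$; $\mathcal{S}_R(Q)=\{\mathbf{y}^N:\frac1N\sum_i\ln\frac1{\alpha_{y_i}(Q)}\le R\}$. ''$q_Q$ dominates $W(\cdot|x)$'' means $W(\cdot|x)\ll q_Q$. *)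

(* Defs.v *)
From HB Require Import structures.
From mathcomp Require Import all_boot all_order all_algebra.
From mathcomp Require Import all_classical all_reals.
From mathcomp Require Import sequences exp.
Set Implicit Arguments. Unset Strict Implicit. Unset Printing Implicit Defensive.
Import Order.TTheory GRing.Theory Num.Theory.
Local Open Scope ring_scope.

Section Defs.
Variables (Rt : realType) (X Y : finType).

(* W x y = W(y|x) *)
Definition is_channel (W : X -> Y -> Rt) :=
  forall x, (forall y, 0 <= W x y) /\ \sum_(y : Y) W x y = 1.

Definition is_distr (Q : X -> Rt) := (forall x, 0 <= Q x) /\ \sum_(x : X) Q x = 1.

Definition singular (W : X -> Y -> Rt) :=
  forall x y z, 0 < W x y * W z y -> W x y = W z y.

Definition WN {N : nat} (W : X -> Y -> Rt) (x : {ffun 'I_N -> X}) (y : {ffun 'I_N -> Y}) : Rt :=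
  \prod_(i < N) W (x i) (y i).

Definition qQ (W : X -> Y -> Rt) (Q : X -> Rt) (y : Y) : Rt := \sum_(x : X) Q x * W x y.

Definition qQN {N : nat} (W : X -> Y -> Rt) (Q : X -> Rt) (y : {ffun 'I_N -> Y}) : Rt :=
  \prod_(i < N) qQ W Q (y i).

Definition alpha (W : X -> Y -> Rt) (Q : X -> Rt) (y : Y) : Rt :=
  \sum_(x : X | 0 < W x y) Q x.

(* S_R(Q); ln(1/0) = +oo in the paper, so sequences with some alpha = 0
   are excluded explicitly. *)
Definition SR (N : nat) (W : X -> Y -> Rt) (Q : X -> Rt) (r : Rt) : {set {ffun 'I_N -> Y}} :=
  [set y : {ffun 'I_N -> Y} | [forall i : 'I_N, 0 < alpha W Q (y i)] &&
           ((N%:R)^-1 * \sum_(i < N) ln ((alpha W Q (y i))^-1) <= r)].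

Definition WNset {N : nat} (W : X -> Y -> Rt) (S : {set {ffun 'I_N -> Y}}) (x : {ffun 'I_N -> X}) : Rt :=
  \sum_(y in S) WN W x y.

Definition msize (N : nat) (r : Rt) : nat := `|Num.ceil (expR (N%:R * r))|%N.

Definition avg_err {N M : nat} (W : X -> Y -> Rt)
  (f : 'I_M -> {ffun 'I_N -> X}) (phi : {ffun 'I_N -> Y} -> 'I_M) : Rt :=
  (M%:R)^-1 * \sum_(m < M) \sum_(y : {ffun 'I_N -> Y} | phi y != m) WN W (f m) y.

End Defs.

(* Main.v *)
Require Import Defs.
From HB Require Import structures.
From mathcomp Require Import all_boot all_order all_algebra.
From mathcomp Require Import all_classical all_reals.
From mathcomp Require Import sequences exp.
Import Order.TTheory GRing.Theory Num.Theory.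
Local Open Scope ring_scope.

Theorem lemma11 (Rt : realType) (X Y : finType) (W : X -> Y -> Rt)
  (N : nat) (r : Rt)
  (f : 'I_(msize N r) -> {ffun 'I_N -> X})
  (phi : {ffun 'I_N -> Y} -> 'I_(msize N r))
  (Q : X -> Rt) (z : {ffun 'I_N -> X}) :
  is_channel W -> singular W -> is_distr Q ->
  (forall m, WNset W (SR N W Q r) (f m) = WNset W (SR N W Q r) z) ->
  (forall m (i : 'I_N) (y : Y), qQ W Q y = 0 -> W (f m i) y = 0) ->
  avg_err W f phi >=
    WNset W (SR N W Q r) z
    - \sum_(y in SR N W Q r)
        qQN W Q y * expR (- (N%:R * (r - (N%:R)^-1 *
                     \sum_(i < N) ln ((alpha W Q (y i))^-1)))).
Proof.
move=> hW hsing [hQ0 hQ1] hS _.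
set S := SR N W Q r.
set M := msize N r.
have W0 : forall x y, 0 <= W x y by move=> x y; case: (hW x) => h _; exact: h.
have WN0 : forall (x : {ffun 'I_N -> X}) (y : {ffun 'I_N -> Y}), 0 <= WN W x y.
  by move=> x y; rewrite /WN; apply: prodr_ge0 => i _.
have eM : expR (N%:R * r) <= M%:R.
  rewrite /M /msize natr_absz ger0_norm; first exact: ceil_ge.
  by rewrite ceil_ge0; apply: lt_le_trans (expR_ge0 _); rewrite ltrN10.
have Mpos : 0 < M%:R :> Rt by apply: lt_le_trans eM; exact: expR_gt0.
have step1 : forall m : 'I_M,
    \sum_(y | phi y != m) WN W (f m) y >=
    WNset W S z - \sum_(y in S | phi y == m) WN W (f m) y.
  move=> m.
  have h1 : \sum_(y in S | phi y != m) WN W (f m) y <= \sum_(y | phi y != m) WN W (f m) y.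
    rewrite [leRHS]big_mkcond [leLHS]big_mkcond /=; apply: ler_sum => y _.
    by case: (y \in S); case: (phi y != m) => //=; rewrite ?lexx ?WN0.
  have h2 : WNset W S z = \sum_(y in S | phi y == m) WN W (f m) y
      + \sum_(y in S | phi y != m) WN W (f m) y.
    by rewrite -(hS m) /WNset (bigID (fun y => phi y == m)).
  by rewrite h2 addrC addKr.
have step2 : avg_err W f phi >=
    WNset W S z - (M%:R)^-1 * \sum_(y in S) WN W (f (phi y)) y.
  rewrite /avg_err.
  have -> : \sum_(y in S) WN W (f (phi y)) y =
            \sum_(m < M) \sum_(y in S | phi y == m) WN W (f m) y.
    rewrite (exchange_big_dep (fun y => y \in S)) /=; last by move=> m y _ /andP[].
    apply: eq_bigr => y yS.
    rewrite (eq_bigl (fun m => m == phi y)); last first.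
      by move=> m /=; rewrite yS /= eq_sym.
    by rewrite big_pred1_eq.
  have hM : WNset W S z = (M%:R)^-1 * \sum_(m < M) WNset W S z.
    by rewrite sumr_const card_ord -[WNset _ _ z *+ M]mulr_natl mulrA mulVf ?mul1r // gt_eqF.
  rewrite [in X in X - _]hM -mulrBr; apply: ler_wpM2l; first by rewrite invr_ge0 ltW.
  rewrite -sumrB; apply: ler_sum => m _; exact: step1.
apply: le_trans step2; rewrite lerD2l lerN2 mulr_sumr; apply: ler_sum => y yS.
have yS' := yS; rewrite inE in yS'; case/andP: yS' => /forallP apos _.
set s := \sum_(i < N) ln (alpha W Q (y i))^-1.
have qQ0 : forall b, 0 <= qQ W Q b.
  by move=> b; rewrite /qQ; apply: sumr_ge0 => x _; apply: mulr_ge0.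
have Wle : forall x i, W x (y i) <= qQ W Q (y i) / alpha W Q (y i).
  move=> x i; have ha := apos i.
  have [Wp|] := ltP 0 (W x (y i)); last first.
    move=> Wle0; apply: le_trans Wle0 _; apply: divr_ge0 => //; exact: ltW.
  rewrite ler_pdivlMr // /qQ /alpha mulr_sumr.
  rewrite [X in _ <= X](bigID (fun x' => 0 < W x' (y i))) /=.
  have -> : \sum_(x' | ~~ (0 < W x' (y i))) Q x' * W x' (y i) = 0.
    apply: big1 => x' hx'; have : W x' (y i) = 0.
      by apply/eqP; rewrite eq_le W0 andbT leNgt.
    by move=> ->; rewrite mulr0.
  rewrite addr0 le_eqVlt; apply/orP; left; apply/eqP; apply: eq_bigr => x' hx'.
  rewrite mulrC; congr (_ * _); apply: hsing; exact: mulr_gt0.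
have e1 : WN W (f (phi y)) y <= qQN W Q y * expR s.
  have -> : expR s = \prod_(i < N) (alpha W Q (y i))^-1.
    rewrite /s (big_morph expR (@expRD Rt) (@expR0 Rt)); apply: eq_bigr => i _.
    by rewrite lnK // posrE invr_gt0.
  rewrite /qQN -big_split /=; apply: ler_prod => i _; rewrite W0 /=; exact: Wle.
have e2 : expR (- (N%:R * (r - (N%:R)^-1 * s))) = (expR (N%:R * r))^-1 * expR s.
  have -> : N%:R * (r - (N%:R)^-1 * s) = N%:R * r - s.
    have [hN|hN] := eqVneq N 0%N.
      have -> : s = 0 by rewrite /s; apply: big1 => i _; exfalso; have := ltn_ord i; rewrite [X in (_ < X)%N]hN.
      by rewrite hN !mul0r subr0.
    by rewrite mulrBr mulrA mulfV ?mul1r // pnatr_eq0.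
  by rewrite opprB expRB mulrC.
rewrite e2 mulrCA (mulrC (qQN W Q y)).
apply: (le_trans (ler_wpM2l _ e1)); first by rewrite invr_ge0 ltW.
rewrite (mulrC (expR s)); apply: ler_wpM2r.
  by apply: mulr_ge0; [rewrite /qQN; apply: prodr_ge0 => i _|exact: expR_ge0].
by rewrite lef_pV2 ?posrE ?expR_gt0.
Qed.
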